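(* Let $d\ge2$, let $\mathbf A,\mathbf B\in\overline{\mathbb Q}[t]$ be nonzero coprime polynomials, $\mathbf c=\mathbf A/\mathbf B$, let $\lambda\in\overline{\mathbb Q}^*$ and let $|\cdot|_v$ be an absolute value on $\overline{\mathbb Q}$. Then for each $n\ge1$, $$M_{n+1,v}(\lambda)\ge\frac{\min\{|\lambda|_v,1\}}{2\max\{|\lambda|_v,1\}}\cdot M_{n,v}(\lambda)^d.$$
   Context: The polynomials $\mathbf A_{\mathbf c,n},\mathbf B_{\mathbf c,n}$ are defined by: $\mathbf A_{\mathbf c,0}=\mathbf A$, $\mathbf B_{\mathbf c,0}=\mathbf B$; if $\mathbf A(0)\neq0$ then $\mathbf A_{\mathbf c,1}=\mathbf A^d+t\mathbf B^d$, $\mathbf B_{\mathbf c,1}=\mathbf A\mathbf B^{d-1}$, while if $\mathbf A(0)=0$ then $\mathbf A_{\mathbf c,1}=(\mathbf A^d+t\mathbf B^d)/t$, $\mathbf B_{\mathbf c,1}=\mathbf A\mathbf B^{d-1}/t$; for $n\ge1$, $\mathbf A_{\mathbf c,n+1}=\mathbf A_{\mathbf c,n}^d+t\mathbf B_{\mathbf c,n}^d$, $\mathbf B_{\mathbf c,n+1}=\mathbf A_{\mathbf c,n}\mathbf B_{\mathbf c,n}^{d-1}$. Then $M_{n,v}(\lambda)=\max\{|\mathbf A_{\mathbf c,n}(\lambda)|_v,|\mathbf B_{\mathbf c,n}(\lambda)|_v\}$. *)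

(* Defs.v *)
From HB Require Import structures.
From mathcomp Require Import all_boot all_order all_algebra all_field.
From mathcomp Require Import reals.
Set Implicit Arguments. Unset Strict Implicit. Unset Printing Implicit Defensive.
Import Order.TTheory GRing.Theory Num.Theory.
Local Open Scope ring_scope.

(* Qbar is modelled by algC (the algebraic closure of Q in mathcomp). *)

Definition is_absval (R : realType) (v : algC -> R) : Prop :=
  [/\ (forall x, 0 <= v x),
      (forall x, v x = 0 <-> x = 0),
      (forall x y, v (x * y) = v x * v y) &
      (forall x y, v (x + y) <= v x + v y)].

Definition ab_step (d : nat) (p : {poly algC} * {poly algC}) :=
  (p.1 ^+ d + 'X * p.2 ^+ d, p.1 * p.2 ^+ (d - 1)).

Definition ab_first (d : nat) (A B : {poly algC}) :=
  if A.[0] != 0 then ab_step d (A, B)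
  else ((ab_step d (A, B)).1 %/ 'X, (ab_step d (A, B)).2 %/ 'X).

Fixpoint cAB (d : nat) (A B : {poly algC}) (n : nat) :=
  match n with
  | 0 => (A, B)
  | 1 => ab_first d A B
  | m.+1 => ab_step d (cAB d A B m)
  end.

Definition Mnv (R : realType) (v : algC -> R) (d : nat) (A B : {poly algC})
  (n : nat) (lam : algC) : R :=
  Num.max (v (cAB d A B n).1.[lam]) (v (cAB d A B n).2.[lam]).

(* Main.v *)
Require Import Defs.
From HB Require Import structures.
From mathcomp Require Import all_boot all_order all_algebra all_field.
From mathcomp Require Import reals.
From mathcomp Require Import ring lra.
Import Order.TTheory GRing.Theory Num.Theory.
Local Open Scope ring_scope.

Lemma key (R : realType) (x y L c X Y : R) (d : nat) :
  0 <= x -> 0 <= y -> 0 < L -> 0 <= c -> 2 * c <= L -> 2 * c * L <= 1 ->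
  x ^+ d - L * y ^+ d <= X -> L * y ^+ d - x ^+ d <= X ->
  Y = x * y ^+ d.-1 -> (1 <= d)%N ->
  c * Num.max x y ^+ d <= Num.max X Y.
Proof.
move=> x0 y0 L0 c0 h1 h2 hX1 hX2 -> d1.
have Q0 : 0 <= y ^+ d by apply: exprn_ge0.
have P0 : 0 <= x ^+ d by apply: exprn_ge0.
have ed : d = d.-1.+1 by rewrite prednK.
rewrite le_max /Order.max; case: ifPn => hxy.
- have xy : x <= y by apply: ltW.
  have hY : x ^+ d <= x * y ^+ d.-1.
    rewrite {1}ed exprS ler_wpM2l //.
    by apply: lerXn2r; rewrite ?nnegrE.
  have [h|h] := leP (x ^+ d) (L * y ^+ d / 2).
  + apply/orP; left; nra.
  + apply/orP; right; nra.
- have yx : y <= x by rewrite leNgt.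
  have hY : y ^+ d <= x * y ^+ d.-1.
    by rewrite {1}ed exprS ler_wpM2r // exprn_ge0.
  have [h|h] := leP (L * y ^+ d) (x ^+ d / 2).
  + apply/orP; left; nra.
  + apply/orP; right; nra.
Qed.

Theorem lemma5p5 (R : realType) (d : nat) (A B : {poly algC}) (lam : algC)
  (v : algC -> R) :
  (2 <= d)%N -> A != 0 -> B != 0 -> coprimep A B -> lam != 0 ->
  is_absval v ->
  forall n : nat, (1 <= n)%N ->
    Mnv v d A B n.+1 lam >=
      Num.min (v lam) 1 / (2 * Num.max (v lam) 1) * Mnv v d A B n lam ^+ d.
Proof.
move=> hd _ _ _ hl [v0 v00 vM vD] [|m] // _.
have v1 : v 1 = 1.
  have h1 : v 1 != 0 by apply/eqP => /v00 /eqP; rewrite oner_eq0.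
  have : v 1 * v 1 = v 1 * 1 by rewrite -vM mulr1 mulr1.
  by move/(mulfI h1).
have vN1 : v (-1) = 1.
  have : v (-1) * v (-1) = 1 by rewrite -vM mulrNN mulr1.
  have := v0 (-1); nra.
have vN x : v (- x) = v x by rewrite -mulN1r vM vN1 mul1r.
have vX x k : v (x ^+ k) = v x ^+ k.
  by elim: k => [|k IH]; rewrite ?expr0 ?v1 // !exprS vM IH.
have vsub x y : v x - v y <= v (x + y).
  have := vD (x + y) (- y); rewrite addrK vN; lra.
have L0 : 0 < v lam by rewrite lt_def v0 andbT; apply/eqP => /v00 /eqP; rewrite (negbTE hl).
rewrite /Mnv.
have -> : cAB d A B m.+2 = ab_step d (cAB d A B m.+1) by [].
set p := cAB d A B m.+1.
rewrite /ab_step /= !hornerE.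
set c := _ / _.
have [c0 c1 c2] : [/\ 0 <= c, 2 * c <= v lam & 2 * c * v lam <= 1].
  rewrite /c /Order.min /Order.max; case: ifPn => h.
  - rewrite mulr1; split; nra.
  - have h1 : 1 <= v lam by rewrite leNgt.
    have e : 2 * (1 / (2 * v lam)) = (v lam)^-1 by field; rewrite gt_eqF ?(lt_le_trans ltr01 h1).
    have iv0 : 0 < (v lam)^-1 by rewrite invr_gt0.
    have iv1 : (v lam)^-1 <= 1 by rewrite invf_le1.
    rewrite e mulVf ?gt_eqF //; split => //.
    + by rewrite divr_ge0 // ?ltW // mulr_gt0.
    + lra.
apply: (@key _ _ _ (v lam)) => //; rewrite ?v0 //.
- have := vsub (p.1.[lam] ^+ d) (lam * p.2.[lam] ^+ d); rewrite vM !vX; lra.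
- have := vsub (lam * p.2.[lam] ^+ d) (p.1.[lam] ^+ d); rewrite [lam * _ + _]addrC vM !vX; lra.
- by rewrite vM vX subn1.
- by apply: leq_trans hd.
Qed.
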